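(* Let $\Gamma$ be a weighted digraph with vertex set $\{1,\dots,n\}$, $n>1$, without loops and with strictly positive arc weights, with Laplacian matrix $L$, in-forest dimension $d$, and let $\tilde J=J_{n-d}=\sigma_{n-d}^{-1}Q_{n-d}$. Then: (i) $L\tilde J=\tilde JL=LQ_{n-d}=Q_{n-d}L=0$; (ii) $\tilde JJ_k=J_k\tilde J=\tilde J$ for $k=0,\dots,n-d$; (iii) $\tilde J^2=\tilde J$; (iv) $\operatorname{rank}\tilde J=\mu_1(\tilde J)=\operatorname{tr}\tilde J=d$ and $\mu_0(\tilde J)=n-d$.
   Context: $W=(w_{ij})$ is the matrix of arc weights ($w_{ij}>0$ iff there is an arc $i\to j$, else $0$). The Laplacian $L=(\ell_{ij})$: $\ell_{ij}=-w_{ij}$ for $j\ne i$, $\ell_{ii}=\sum_{k\ne i}w_{ik}$. The weight of a subgraph is the product of its arc weights (1 if no arcs); the weight of a set of subgraphs is the sum of their weights. A converging tree is a weakly connected digraph with one vertex (the root) of outdegree 0 and all others of outdegree 1; an in-forest is a spanning subgraph of $\Gamma$ whose weak components are converging trees. The in-forest dimension $d$ is the minimal number of trees in an in-forest (so in-forests have at most $n-d$ arcs). $\sigma_k$ is the total weight of in-forests with $k$ arcs; $Q_k=(q^k_{ij})$ with $q^k_{ij}$ the total weight of in-forests with $k$ arcs in which $i$ lies in a tree rooted at $j$; $J_k=\sigma_k^{-1}Q_k$ for $k=0,\dots,n-d$. $\mu_\lambda(A)$ denotes the multiplicity of $\lambda$ as an eigenvalue of the square matrix $A$. *)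

(* Defs.v *)
From HB Require Import structures.
From mathcomp Require Import all_boot all_order all_algebra.
Set Implicit Arguments. Unset Strict Implicit. Unset Printing Implicit Defensive.
Import Order.TTheory GRing.Theory Num.Theory.
Local Open Scope ring_scope.

(* A weighted digraph on vertex set 'I_n is given by its weight matrix W:
   there is an arc i -> j iff 0 < W i j.  A spanning subgraph is a set of arcs. *)
Section Digraph.
Variables (R : realFieldType) (n : nat) (W : 'M[R]_n).

Definition arcs : {set 'I_n * 'I_n} := [set a | 0 < W a.1 a.2].

Definition laplacian : 'M[R]_n :=
  \matrix_(i, j) if i == j then \sum_(k | k != i) W i k else - W i j.

Definition outdeg (F : {set 'I_n * 'I_n}) (v : 'I_n) : nat :=
  #|[set a in F | a.1 == v]|.

Definition weak_adj (F : {set 'I_n * 'I_n}) : rel 'I_n :=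
  fun x y => ((x, y) \in F) || ((y, x) \in F).
Definition wcomp (F : {set 'I_n * 'I_n}) (v : 'I_n) : {set 'I_n} :=
  [set u | connect (weak_adj F) v u].

(* F is an in-forest of Gamma: its arcs are arcs of Gamma, and each weak
   component is a converging tree (exactly one vertex of outdegree 0, all
   others of outdegree 1). *)
Definition is_inforest (F : {set 'I_n * 'I_n}) : bool :=
  (F \subset arcs) &&
  [forall v, (#|[set u in wcomp F v | outdeg F u == 0%N]| == 1%N) &&
             [forall u in wcomp F v, outdeg F u <= 1]%N].

(* number of trees = number of roots *)
Definition ntrees (F : {set 'I_n * 'I_n}) : nat :=
  #|[set v | outdeg F v == 0%N]|.

Definition inforest_dim : nat :=
  \big[minn/n]_(F : {set 'I_n * 'I_n} | is_inforest F) ntrees F.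

Definition sweight (F : {set 'I_n * 'I_n}) : R := \prod_(a in F) W a.1 a.2.

Definition sigma (k : nat) : R :=
  \sum_(F : {set 'I_n * 'I_n} | is_inforest F && (#|F| == k)) sweight F.

Definition rooted_at (F : {set 'I_n * 'I_n}) (i j : 'I_n) : bool :=
  (j \in wcomp F i) && (outdeg F j == 0%N).

Definition Qmx (k : nat) : 'M[R]_n :=
  \matrix_(i, j) \sum_(F : {set 'I_n * 'I_n} |
                        [&& is_inforest F, #|F| == k & rooted_at F i j]) sweight F.

Definition Jmx (k : nat) : 'M[R]_n := (sigma k)^-1 *: Qmx k.

End Digraph.

Definition eigmult (R : fieldType) (n : nat) (lambda : R) (A : 'M[R]_n) : nat :=
  mup lambda (char_poly A).

(* Main.v *)
Require Import Defs.
From HB Require Import structures.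
From mathcomp Require Import all_boot all_order all_algebra.
From mathcomp Require Import ring zify.
Import Order.TTheory GRing.Theory Num.Theory.

Module PropAux.
Set Implicit Arguments. Unset Strict Implicit. Unset Printing Implicit Defensive.

Section FunGraph.
Variable T : finType.
Implicit Types (f g : T -> T) (x y z i m : T).

Definition acyc f := [forall x, [exists y, fconnect f x y && (f y == y)]].
Definition rt f x := odflt x [pick y | fconnect f x y && (f y == y)].
Definition upd f i m := fun x => if x == i then m else f x.

Lemma fconnectP f x y : fconnect f x y -> exists k, y = iter k f x.
Proof. by move=> /iter_findex <-; exists (findex f x y). Qed.

Lemma fix_conn f x y : f y = y -> fconnect f y x -> x = y.
Proof. by move=> fy /fconnectP [k ->]; rewrite iter_fix. Qed.

Lemma conn_step f y z : fconnect f y z -> y != z -> fconnect f (f y) z.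
Proof.
move=> /fconnectP [[|k] ->]; first by rewrite eqxx.
by rewrite iterSr => _; apply: fconnect_iter.
Qed.

Lemma rt_spec f x : acyc f -> fconnect f x (rt f x) && (f (rt f x) == rt f x).
Proof.
move=> /forallP /(_ x) /existsP [y Hy]; rewrite /rt.
by case: pickP => [z -> //|/(_ y)]; rewrite Hy.
Qed.

Lemma rt_conn f x : acyc f -> fconnect f x (rt f x).
Proof. by move=> /(rt_spec x) /andP []. Qed.

Lemma rt_fix f x : acyc f -> f (rt f x) = rt f x.
Proof. by move=> /(rt_spec x) /andP [_ /eqP]. Qed.

Lemma rt_uniq f x y : acyc f -> fconnect f x y -> f y = y -> rt f x = y.
Proof.
move=> ac /fconnectP [a ea] fy.
have /fconnectP [b eb] := rt_conn x ac.
have fr := rt_fix x ac.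
rewrite eb ea in fr *; rewrite ea in fy.
have [ab|ba] := leqP a b.
  by rewrite -(subnK ab) iterD (iter_fix _ fy).
by rewrite -(subnK (ltnW ba)) iterD (iter_fix _ fr).
Qed.

Lemma rt_id f x : acyc f -> (rt f x == x) = (f x == x).
Proof.
move=> ac; apply/eqP/eqP => [<-|fx]; first exact: rt_fix.
by apply: rt_uniq => //; apply: connect0.
Qed.

Lemma rt_f f x : acyc f -> rt f (f x) = rt f x.
Proof.
move=> ac; apply: rt_uniq => //; last exact: rt_fix.
have [e|ne] := eqVneq x (rt f x); last exact: conn_step (rt_conn _ ac) ne.
by rewrite {1}e rt_fix //; apply: connect0.
Qed.

Lemma agree_conn f g i x y : (forall z, z != i -> g z = f z) ->
  fconnect f x y -> fconnect g x y || (fconnect f x i && fconnect g x i).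
Proof.
move=> ag /fconnectP [k ->]; elim: k => [|k IH]; first by rewrite connect0.
case/orP: IH => [c|]; last by move=> ->; rewrite orbT.
have [e|ne] := eqVneq (iter k f x) i.
  by rewrite -e c fconnect_iter orbT.
by rewrite iterS -(ag _ ne) (connect_trans c (fconnect1 _ _)).
Qed.

Lemma attach f i m : acyc f -> f i = i -> rt f m != i ->
  acyc (upd f i m) /\
  forall x, rt (upd f i m) x = if rt f x == i then rt f m else rt f x.
Proof.
move=> ac fi rm.
have ag z : z != i -> upd f i m z = f z by rewrite /upd => /negbTE ->.
have case1 x : rt f x != i ->
   fconnect (upd f i m) x (rt f x) && (upd f i m (rt f x) == rt f x).
  move=> rx; rewrite ag // rt_fix // eqxx andbT.
  case/orP: (agree_conn ag (rt_conn x ac)) => // /andP [c _].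
  by rewrite (rt_uniq ac c fi) eqxx in rx.
have case2 x : rt f x == i ->
   fconnect (upd f i m) x (rt f m) && (upd f i m (rt f m) == rt f m).
  move=> /eqP rx; have := case1 _ rm; case/andP=> c2 ->; rewrite andbT.
  have c1 : fconnect (upd f i m) x i.
    by case/orP: (agree_conn ag (rt_conn x ac)) => [|/andP[] //]; rewrite rx.
  apply: connect_trans c1 (connect_trans _ c2).
  by have := fconnect1 (upd f i m) i; rewrite /upd eqxx.
have acg : acyc (upd f i m).
  apply/forallP => x; apply/existsP.
  by case: (eqVneq (rt f x) i) => [/eqP/case2|/case1] H; eexists; exact: H.
split => // x; case: ifP => [/case2|/negbT/case1] /andP [c /eqP e];
  exact: rt_uniq.
Qed.

Lemma cut_acyc f i : acyc f -> acyc (upd f i i).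
Proof.
move=> ac; have ag z : z != i -> upd f i i z = f z by rewrite /upd => /negbTE ->.
apply/forallP => x; apply/existsP.
case/orP: (agree_conn ag (rt_conn x ac)) => [c|/andP [_ c]].
  exists (rt f x); rewrite c /=.
  by have [->|ne] := eqVneq (rt f x) i; [rewrite /upd eqxx | rewrite ag // rt_fix].
by exists i; rewrite c /upd eqxx /= eqxx.
Qed.

Lemma cut_conn f i y : fconnect (upd f i i) y i -> fconnect f y i.
Proof.
move=> c.
have ag z : z != i -> f z = upd f i i z by rewrite /upd => /negbTE ->.
by case/orP: (agree_conn ag c) => // /andP [].
Qed.

Lemma cycle_fix f i : acyc f -> fconnect f (f i) i -> f i = i.
Proof.
move=> ac c.
have H k : fconnect f (iter k f i) i.
  elim: k => [|k IH]; first exact: connect0.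
  have [e|ne] := eqVneq (iter k f i) i; first by rewrite iterS e.
  by rewrite iterS; apply: conn_step.
have /fconnectP [k ek] := rt_conn i ac.
have := H k; rewrite -ek => /(fix_conn (rt_fix i ac)) ei.
by rewrite {1}ei rt_fix // -ei.
Qed.

Lemma cut_rt f i : acyc f -> f i != i -> rt (upd f i i) (f i) != i.
Proof.
move=> ac fi; apply/eqP => e.
have c := rt_conn (f i) (cut_acyc i ac); rewrite e in c.
by move/cut_conn: c => /(cycle_fix ac) /eqP; rewrite (negbTE fi).
Qed.

Lemma acyc_ext f g : f =1 g -> acyc f = acyc g.
Proof.
move=> e; apply: eq_forallb => x; apply: eq_existsb => y.
by rewrite (eq_fconnect e) e.
Qed.

Lemma rt_ext f g : f =1 g -> rt f =1 rt g.
Proof.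
move=> e x; rewrite /rt; congr odflt; apply: eq_pick => y.
by rewrite /= (eq_fconnect e) e.
Qed.

End FunGraph.

Local Open Scope ring_scope.

Lemma char_poly_conj (F : fieldType) n (A U : 'M[F]_n) : U \in unitmx ->
  char_poly (U *m A *m invmx U) = char_poly A.
Proof.
move=> Uu; rewrite /char_poly /char_poly_mx.
set Up := map_mx polyC U; set Vp := map_mx polyC (invmx U).
have UV : Up *m Vp = 1%:M by rewrite -map_mxM mulmxV // map_mx1.
have -> : 'X%:M - map_mx polyC (U *m A *m invmx U)
   = Up *m ('X%:M - map_mx polyC A) *m Vp.
  rewrite !map_mxM mulmxBr mulmxBl mul_mx_scalar -scalemxAl UV.
  by rewrite scalemx1.
by rewrite det_mulmx det_mulmx mulrAC -det_mulmx UV det1 mul1r.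
Qed.

Lemma idem_facts (F : fieldType) n (A : 'M[F]_n) : A *m A = A ->
  [/\ \tr A = (\rank A)%:R, mup 1 (char_poly A) = \rank A
    & mup 0 (char_poly A) = (n - \rank A)%N].
Proof.
move=> AA.
set r := \rank A.
have eb := mulmx_ebase A.
set L := col_ebase A in eb; set U := row_ebase A in eb.
have Lu : L \in unitmx by apply: col_ebase_unit.
have Uu : U \in unitmx by apply: row_ebase_unit.
set D : 'M[F]_n := pid_mx r in eb.
set M := U *m L.
have DMD : D *m M *m D = D.
  have : L *m (D *m M *m D) *m U = L *m D *m U.
    by rewrite /M !mulmxA eb -[in RHS]AA -eb !mulmxA.
  by move/(congr1 (mulmx (invmx L))); rewrite !mulmxA mulVmx // mul1mx
     -!mulmxA => /(congr1 (mulmx^~ (invmx U))); rewrite !mulmxA !mulmxK.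
have conjA : U *m A *m invmx U = M *m D.
  by rewrite -eb /M !mulmxA mulmxK.
have Dij (i j : 'I_n) : D i j = ((i == j :> nat) && (i < r)%N)%:R.
  by rewrite /D /pid_mx mxE.
have MDij (i j : 'I_n) : (M *m D) i j = M i j * (j < r)%N%:R.
  rewrite mxE (bigD1 j) //= big1 ?addr0; first by rewrite Dij eqxx.
  by move=> k /negbTE kj; rewrite Dij (inj_eq val_inj) kj mulr0.
have Mij (i j : 'I_n) : (i < r)%N -> (j < r)%N -> M i j = (i == j)%:R.
  move=> ir jr; have := congr1 (fun B : 'M[F]_n => B i j) DMD.
  rewrite -mulmxA mxE (bigD1 i) //= big1 ?addr0.
    by rewrite MDij jr mulr1 Dij eqxx ir mul1r Dij ir andbT => ->.
  by move=> k /negbTE ki; rewrite Dij (inj_eq val_inj) eq_sym ki mul0r.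
have trig : is_trig_mx (M *m D).
  apply/is_trig_mxP => i j ij; rewrite MDij.
  case jr: (j < r)%N; last by rewrite mulr0.
  have /negbTE ne : i != j by rewrite -(inj_eq val_inj) /= ltn_eqF.
  by rewrite Mij ?(ltn_trans ij) // ne mul0r.
have diag (i : 'I_n) : (M *m D) i i = (i < r)%N%:R.
  rewrite MDij; case ir: (i < r)%N; last by rewrite mulr0.
  by rewrite Mij // eqxx mulr1.
have rn : (r <= n)%N by apply: rank_leq_row.
have cp : char_poly A = \prod_(y <- [seq ((i < r)%N%:R : F) | i : 'I_n <- enum 'I_n]) ('X - y%:P).
  rewrite -(char_poly_conj A Uu) conjA char_poly_trig // big_map big_enum /=.
  by apply: eq_bigr => i _; rewrite diag.
have cnt (b : bool) : count_mem (b%:R : F) [seq ((i < r)%N%:R : F) | i : 'I_n <- enum 'I_n]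
     = if b then r else (n - r)%N.
  rewrite count_map.
  have -> : count (preim (fun i : 'I_n => ((i < r)%N%:R : F)) (pred1 b%:R)) (enum 'I_n)
      = count (fun k : nat => (k < r)%N == b) (map val (enum 'I_n)).
    rewrite count_map; apply: eq_count => i /=.
    by case: (i < r)%N; case: b; rewrite /= ?eqxx ?oner_eq0 // eq_sym oner_eq0.
  rewrite val_enum_ord -(subnKC rn) iotaD count_cat add0n.
  have cb (c : bool) s : count (fun _ : nat => c) s = if c then size s else 0%N.
    by case: c; [exact: count_predT | exact: count_pred0].
  rewrite (@eq_in_count _ _ (fun _ => b) (iota 0 r)); last first.
    by move=> k; rewrite mem_iota /= => ->; case: b.
  rewrite (@eq_in_count _ _ (fun _ => ~~ b) (iota r _)); last first.
    by move=> k; rewrite mem_iota => /andP[/leq_gtF -> _]; case: b.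
  rewrite !cb !size_iota; case: b => /=.
  - exact: addn0.
  - by rewrite add0n addKn.
split.
- have -> : \tr A = \tr (U *m A *m invmx U).
    by rewrite mxtrace_mulC mulmxA mulVmx // mul1mx.
  rewrite conjA /mxtrace (eq_bigr (fun i : 'I_n => ((i < r)%N%:R : F))); last first.
    by move=> i _; rewrite diag.
  rewrite -natr_sum; congr (_%:R).
  rewrite -(big_mkord xpredT (fun i => nat_of_bool (i < r)%N)).
  rewrite (big_cat_nat (leq0n r) rn) /=.
  rewrite (@eq_big_nat _ _ _ 0 r _ (fun _ => 1%N)); last by move=> i /andP[_ ->].
  rewrite (@eq_big_nat _ _ _ r n _ (fun _ => 0%N)); last by move=> i /andP[/leq_gtF ->].
  by rewrite !sum_nat_const_nat muln1 muln0 addn0 subn0.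
- by rewrite cp mu_prod_XsubC (cnt true).
- by rewrite cp mu_prod_XsubC (cnt false).
Qed.

Lemma sum_invol (I : finType) (R : numFieldType) (P : pred I) (s : I -> I)
  (F : I -> R) : (forall x, P x -> P (s x)) -> (forall x, P x -> s (s x) = x) ->
  (forall x, P x -> F (s x) = - F x) -> \sum_(x | P x) F x = 0.
Proof.
move=> Ps ss Fs.
have e : \sum_(x | P x) F x = - \sum_(x | P x) F x.
  rewrite -sumrN [LHS](reindex_onto s s ss); apply: eq_big => x.
    apply/andP/idP => [[Px /eqP e]|Px]; first by rewrite -e; apply: Ps.
    by split; [apply: Ps | rewrite ss].
  by move=> /andP [Psx /eqP e]; rewrite Fs // -e; apply: Ps.
have : (\sum_(x | P x) F x) *+ 2 == 0 by rewrite mulr2n {1}e addNr.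
by rewrite mulrn_eq0 /= => /eqP.
Qed.

Section Rec.
Variables (R : realFieldType) (n : nat) (W : 'M[R]_n).
Hypotheses (hloop : forall i, W i i = 0) (hpos : forall i j, 0 <= W i j).
Local Notation T := 'I_n.
Implicit Types (f g h : {ffun T -> T}) (i j m p x : T).

Definition good f := acyc f && [forall x, (f x != x) ==> (0 < W x (f x))].
Definition nf f := #|[set x | f x != x]|.
Definition wt f := \prod_(x | f x != x) W x (f x).
Definition updf f i m : {ffun T -> T} := [ffun x => if x == i then m else f x].
Definition Pk k f := good f && (nf f == k).
Definition Qf k i j := \sum_(f | Pk k f && (rt f i == j)) wt f.
Definition Sf k := \sum_(f | Pk k f) wt f.

Lemma updfE f i m : updf f i m =1 upd f i m.
Proof. by move=> x; rewrite ffunE. Qed.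

Lemma updK f i m p : updf (updf f i m) i p = updf f i p.
Proof. by apply/ffunP => x; rewrite !ffunE; case: eqP. Qed.

Lemma updf_id f i : updf f i (f i) = f.
Proof. by apply/ffunP => x; rewrite !ffunE; case: eqP => // ->. Qed.

Lemma updf_i f i m : updf f i m i = m.
Proof. by rewrite ffunE eqxx. Qed.

Lemma good_acyc f : good f -> acyc f.
Proof. by case/andP. Qed.

Lemma good_arc f x : good f -> f x != x -> 0 < W x (f x).
Proof. by case/andP => _ /forallP /(_ x) /implyP. Qed.

Lemma W_neq i m : 0 < W i m -> m != i.
Proof. by apply: contraTneq => ->; rewrite hloop ltxx. Qed.

Lemma good_attach f i m : good f -> f i = i -> rt f m != i -> 0 < W i m ->
  good (updf f i m) /\
  forall x, rt (updf f i m) x = if rt f x == i then rt f m else rt f x.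
Proof.
move=> gf fi rm wm.
have [ac rtE] := attach (good_acyc gf) fi rm.
split; last by move=> x; rewrite (rt_ext (updfE f i m)) rtE.
rewrite /good (acyc_ext (updfE f i m)) ac /=.
apply/forallP => x; apply/implyP; rewrite ffunE.
have [-> _|xi] := eqVneq x i; first exact: wm.
exact: good_arc gf.
Qed.

Lemma nf_attach f i m : f i = i -> m != i -> nf (updf f i m) = (nf f).+1.
Proof.
move=> fi mi; rewrite /nf.
have -> : [set x | updf f i m x != x] = i |: [set x | f x != x].
  apply/setP => x; rewrite !inE ffunE.
  by have [->|xi] := eqVneq x i; rewrite ?mi.
by rewrite cardsU1 inE fi eqxx.
Qed.

Lemma wt_attach f i m : f i = i -> m != i -> wt (updf f i m) = W i m * wt f.
Proof.
move=> fi mi; rewrite /wt (bigD1 i) ?updf_i //=; congr (_ * _).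
apply: eq_big => x; rewrite ffunE.
  by have [->|xi] := eqVneq x i; rewrite ?fi ?eqxx ?andbF ?andbT.
by have [->|xi] := eqVneq x i; rewrite ?eqxx // andbF.
Qed.

Lemma good_cut f i : good f -> good (updf f i i).
Proof.
move=> gf; rewrite /good (acyc_ext (updfE f i i)) cut_acyc ?good_acyc //=.
apply/forallP => x; apply/implyP; rewrite ffunE.
by have [->|xi] := eqVneq x i; rewrite ?eqxx // => /(good_arc gf).
Qed.

Lemma rt_cut_neq f i : good f -> f i != i -> rt (updf f i i) (f i) != i.
Proof.
move=> gf fi; rewrite (rt_ext (updfE f i i)).
exact: cut_rt (good_acyc gf) fi.
Qed.

Lemma cut_fix f i : updf f i i i = i.
Proof. exact: updf_i. Qed.

Lemma sum_cond (I : finType) (P c : pred I) (F : I -> R) :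
  \sum_(x | P x && c x) F x = \sum_(x | P x) F x * (c x)%:R.
Proof.
rewrite big_mkcondr; apply: eq_bigr => x _.
by case: (c x); rewrite ?mulr1 ?mulr0.
Qed.

Lemma QfE k x j : Qf k x j = \sum_(f | Pk k f) wt f * (rt f x == j)%:R.
Proof. exact: sum_cond. Qed.

Lemma key_data f i m : good f -> f i != i -> 0 < W i m -> rt f m != rt f i ->
  let h := updf f i i in let g := updf f i m in
  [/\ good g, nf g = nf f, g i = m, rt g i = rt f m & rt g (f i) = rt f i] /\
  (wt f = W i (f i) * wt h /\ wt g = W i m * wt h).
Proof.
move=> gf fi wm rne h g.
have gh : good h := good_cut i gf.
have hi : h i = i := updf_i f i i.
have rp : rt h (f i) != i := rt_cut_neq gf fi.
have wp : 0 < W i (f i) := good_arc gf fi.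
have ef : updf h i (f i) = f by rewrite /h updK updf_id.
have [_ rtf] := good_attach gh hi rp wp; rewrite ef in rtf.
have rhi : rt h i = i by apply/eqP; rewrite rt_id ?good_acyc // hi.
have rm : rt h m != i.
  by apply: contra rne => /eqP e; rewrite !rtf e rhi eqxx.
have eg : g = updf h i m by rewrite /g /h updK.
have [gg rtg] := good_attach gh hi rm wm.
split; first split.
- by rewrite eg.
- by rewrite eg nf_attach ?W_neq // -[in RHS]ef nf_attach ?W_neq.
- exact: updf_i.
- by rewrite eg rtg rtf rhi eqxx (negbTE rm).
- by rewrite eg rtg rtf rhi eqxx (negbTE rp).
split; first by rewrite -{1}ef wt_attach ?W_neq.
by rewrite eg wt_attach ?W_neq.
Qed.

Lemma rec_fun k i j :
  \sum_m W i m * (Qf k i j - Qf k m j) = (i == j)%:R * Sf k.+1 - Qf k.+1 i j.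
Proof.
pose term (p : T * {ffun T -> T}) :=
  W i p.1 * (wt p.2 * (rt p.2 i == j)%:R - wt p.2 * (rt p.2 p.1 == j)%:R).
have -> : \sum_m W i m * (Qf k i j - Qf k m j) = \sum_(p | Pk k p.2) term p.
  rewrite -(pair_big xpredT (Pk k) (fun m f => term (m, f))) /=.
  apply: eq_bigr => m _; rewrite !QfE -sumrB mulr_sumr.
  by apply: eq_bigr.
pose Z (p : T * {ffun T -> T}) := (0 < W i p.1) && (rt p.2 p.1 != rt p.2 i).
rewrite (bigID Z) /= [X in _ + X]big1 ?addr0; last first.
  move=> [m f] /andP [_]; rewrite /Z /term /= negb_and negbK => /orP [wm|/eqP ->].
    have -> : W i m = 0 by apply/eqP; rewrite eq_le hpos andbT leNgt.
    by rewrite mul0r.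
  by rewrite subrr mulr0.
rewrite (bigID (fun p : T * {ffun T -> T} => p.2 i == i)) /=.
rewrite [X in _ + X](sum_invol (s := fun p : T * {ffun T -> T} => (p.2 i, updf p.2 i p.1))) ?addr0.
  rewrite /Sf QfE mulr_sumr -sumrB.
  rewrite [RHS](bigID (fun g : {ffun T -> T} => g i == i)) /= [X in X + _]big1; last first.
    move=> g /andP [/andP [gg _] /eqP gi].
    have -> : rt g i = i by apply/eqP; rewrite rt_id ?good_acyc // gi.
    by rewrite mulrC subrr.
  rewrite add0r.
  rewrite (reindex_onto (fun g : {ffun T -> T} => (g i, updf g i i))
                        (fun p : T * {ffun T -> T} => updf p.2 i p.1)); last first.
    move=> [m f] /= /andP [_ /eqP fi].
    by rewrite updf_i updK -{2}fi updf_id.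
  apply: eq_big => g /=.
    rewrite updK updf_id eqxx andbT /Z /= updf_i.
    set g' := updf g i i.
    have eg : updf g' i (g i) = g by rewrite /g' updK updf_id.
    have g'i : g' i = i := updf_i g i i.
    apply/idP/idP.
      move=> /andP [/andP [/andP [gg' /eqP nfk] /andP [wm rne]] _].
      have rg'i : rt g' i = i by apply/eqP; rewrite rt_id ?good_acyc // g'i.
      rewrite rg'i in rne.
      have [gg _] := good_attach gg' g'i rne wm.
      rewrite eg in gg.
      by rewrite /Pk gg -[X in nf X]eg nf_attach ?W_neq // nfk eqxx.
    move=> /andP [/andP [gg /eqP nfk] gi].
    have gg' : good g' := good_cut i gg.
    have rg'i : rt g' i = i by apply/eqP; rewrite rt_id ?good_acyc // g'i.
    have rne : rt g' (g i) != i by apply: rt_cut_neq.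
    rewrite /Pk gg' rg'i rne good_arc // eqxx !andbT /=.
    move: nfk; rewrite -[X in nf X]eg nf_attach ?W_neq ?good_arc //.
    by move=> [->].
  rewrite /Z /=.
  set g' := updf g i i.
  move=> /andP [/andP [/andP [/andP [gg' _] /andP [wm rne]] _] _].
  have eg : updf g' i (g i) = g by rewrite /g' updK updf_id.
  have g'i : g' i = i := updf_i g i i.
  have rg'i : rt g' i = i by apply/eqP; rewrite rt_id ?good_acyc // g'i.
  rewrite rg'i in rne.
  have [_ rtg] := good_attach gg' g'i rne wm; rewrite eg in rtg.
  rewrite /term /= rg'i rtg rg'i eqxx -{3 4}eg wt_attach ?W_neq //.
  ring.
- move=> [m f]; rewrite /Z /=.
  move=> /andP [/andP [/andP [gf nfk] /andP [wm rne]] fi].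
  have [[gg ng gi rgi rgp] _] := key_data gf fi wm rne.
  rewrite /Pk gg ng nfk good_arc //= gi rgi rgp eq_sym rne /=.
  exact: W_neq.
- move=> [m f]; rewrite /Z /=.
  move=> /andP [/andP [/andP [gf nfk] /andP [wm rne]] fi].
  have [[gg ng gi rgi rgp] _] := key_data gf fi wm rne.
  by rewrite gi updK updf_id.
- move=> [m f]; rewrite /Z /=.
  move=> /andP [/andP [/andP [gf nfk] /andP [wm rne]] fi].
  have [[gg ng gi rgi rgp] [wf wg]] := key_data gf fi wm rne.
  rewrite /term /= rgi rgp wf wg; ring.
Qed.

End Rec.

Section Bridge.
Variables (R : realFieldType) (n : nat) (W : 'M[R]_n).
Hypotheses (hloop : forall i, W i i = 0) (hpos : forall i j, 0 <= W i j).
Local Notation T := 'I_n.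
Implicit Types (f g : {ffun T -> T}) (F : {set T * T}) (i j u v x y : T).

Definition Fof f : {set T * T} := [set a | (f a.1 == a.2) && (a.1 != a.2)].

Lemma inFof f x y : ((x, y) \in Fof f) = (f x == y) && (x != y).
Proof. by rewrite inE. Qed.

Lemma Fof_img f : Fof f = (fun x => (x, f x)) @: [set x | f x != x].
Proof.
apply/setP => [[x y]]; rewrite inFof; apply/andP/imsetP => [[/eqP <- xy]|[z]].
  by exists x; rewrite // inE eq_sym.
by rewrite inE => zf [-> ->]; rewrite eqxx eq_sym.
Qed.

Lemma card_Fof f : #|Fof f| = nf f.
Proof. by rewrite Fof_img card_imset // => x y [->]. Qed.

Lemma sweight_Fof f : sweight W (Fof f) = wt W f.
Proof.
rewrite /sweight Fof_img big_imset /=; last by move=> x y _ _ [->].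
by apply: eq_bigl => x; rewrite inE.
Qed.

Lemma outdeg_Fof f u : outdeg (Fof f) u = (f u != u).
Proof.
rewrite /outdeg; case: eqP => [fu|/eqP fu].
  apply/eqP; rewrite cards_eq0; apply/eqP/setP => [[x y]].
  by rewrite !inE /=; apply/negP => /andP [/andP [/eqP fx xy] /eqP xu];
     move: fx xy; rewrite xu fu => ->; rewrite eqxx.
have -> : [set a in Fof f | a.1 == u] = [set (u, f u)].
  apply/setP => [[x y]]; rewrite !inE /=; apply/idP/idP.
    by move=> /andP [/andP [/eqP <- _] /eqP ->].
  by rewrite xpair_eqE => /andP [/eqP -> /eqP ->]; rewrite !eqxx eq_sym fu.
by rewrite cards1.
Qed.

Lemma Fof_inj : injective Fof.
Proof.
move=> f g e; apply/ffunP => x.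
have h1 f1 f2 : Fof f1 = Fof f2 -> f1 x != x -> f2 x = f1 x.
  move=> E fx; have : (x, f1 x) \in Fof f1 by rewrite inFof eqxx eq_sym.
  by rewrite E inFof => /andP [/eqP].
have [fx|fx] := eqVneq (f x) x; last by rewrite (h1 _ _ e fx).
have [gx|gx] := eqVneq (g x) x; first by rewrite fx gx.
by rewrite (h1 _ _ (esym e) gx).
Qed.

Lemma conn_inv f (h : T -> T) : (forall z, h (f z) = h z) ->
  forall x y, connect (weak_adj (Fof f)) x y -> h x = h y.
Proof.
move=> hf x y /connectP [p pth ->]; elim: p x pth => //= z p IH x /andP [e pth].
rewrite -IH //; move: e; rewrite /weak_adj !inFof => /orP [] /andP [/eqP <- _] //.
Qed.

Lemma conn_inv_b f (h : T -> bool) : (forall z, h (f z) = h z) ->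
  forall x y, connect (weak_adj (Fof f)) x y -> h x = h y.
Proof.
move=> hf x y /connectP [p pth ->]; elim: p x pth => //= z p IH x /andP [e pth].
rewrite -IH //; move: e; rewrite /weak_adj !inFof => /orP [] /andP [/eqP <- _] //.
Qed.

Lemma fconn_weak f x y : fconnect f x y -> connect (weak_adj (Fof f)) x y.
Proof.
apply: connect_sub => a b /eqP <-.
have [->|ne] := eqVneq (f a) a; first exact: connect0.
by apply: connect1; rewrite /weak_adj inFof eqxx eq_sym ne.
Qed.

Lemma wcomp_root f v u : acyc f ->
  (u \in wcomp (Fof f) v) && (f u == u) = (u == rt f v).
Proof.
move=> ac; rewrite inE; apply/andP/eqP => [[c /eqP fu]|->].
  rewrite (conn_inv (h := rt f) _ c); last by move=> z; apply: rt_f.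
  by apply/eqP; rewrite eq_sym rt_id // fu.
by rewrite fconn_weak ?rt_conn // rt_fix.
Qed.

Lemma good_inforest f : good W f -> is_inforest W (Fof f).
Proof.
move=> gf; apply/andP; split.
  apply/subsetP => [[x y]]; rewrite inFof inE /= => /andP [/eqP <- xf].
  by apply: good_arc; rewrite // eq_sym.
apply/forallP => v; apply/andP; split.
  have -> : [set u in wcomp (Fof f) v | outdeg (Fof f) u == 0%N] = [set rt f v].
    apply/setP => u; rewrite !inE outdeg_Fof eqb0 negbK.
    by have := wcomp_root v u (good_acyc gf); rewrite inE.
  by rewrite cards1.
by apply/forall_inP => u _; rewrite outdeg_Fof leq_b1.
Qed.

Lemma rooted_Fof f i j : good W f -> rooted_at (Fof f) i j = (rt f i == j).
Proof.
move=> gf; rewrite /rooted_at outdeg_Fof eqb0 negbK [RHS]eq_sym.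
exact: (wcomp_root i j (good_acyc gf)).
Qed.

Lemma ntrees_Fof f : ntrees (Fof f) = (n - nf f)%N.
Proof.
rewrite /ntrees /nf.
have -> : [set v | outdeg (Fof f) v == 0%N] = ~: [set x | f x != x].
  by apply/setP => v; rewrite !inE outdeg_Fof eqb0.
have e := cardsC [set x | f x != x]; rewrite card_ord in e.
by rewrite -[X in (X - _)%N]e addKn.
Qed.

Lemma reach_inv f z :
  [exists y, fconnect f (f z) y && (f y == y)] = [exists y, fconnect f z y && (f y == y)].
Proof.
apply/existsP/existsP => [[y /andP [c fy]]|[y /andP [c fy]]]; exists y; rewrite fy andbT.
  exact: connect_trans (fconnect1 f z) c.
have [e|ne] := eqVneq z y; last exact: conn_step.
by rewrite e (eqP fy); apply: connect0.
Qed.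

Lemma inforest_Fof F : is_inforest W F -> exists f, good W f /\ F = Fof f.
Proof.
case/andP => /subsetP sub /forallP H.
have noloop x : (x, x) \notin F.
  by apply/negP => /sub; rewrite inE /= hloop ltxx.
have od1 u : (outdeg F u <= 1)%N.
  by case/andP: (H u) => _ /forall_inP; apply; rewrite inE connect0.
have uniq x y z : (x, y) \in F -> (x, z) \in F -> y = z.
  move=> xy xz; have /card_le1_eqP := od1 x.
  by move=> /(_ (x, y) (x, z)); rewrite !inE xy xz eqxx => /(_ erefl erefl) [].
pose f := [ffun x => odflt x [pick y | (x, y) \in F]].
have eF : F = Fof f.
  apply/setP => [[x y]]; rewrite inFof ffunE; apply/idP/andP.
    move=> xy; case: pickP => [z xz|/(_ y)]; last by rewrite xy.
    split; first by rewrite /= (uniq _ _ _ xz xy).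
    by apply: contraTneq xy => ->.
  case: pickP => [z xz /= [/eqP <-] //|_ /= [/eqP ->]]; by rewrite eqxx.
exists f; split => //.
apply/andP; split; last first.
  apply/forallP => x; apply/implyP => fx.
  have : (x, f x) \in F by rewrite eF inFof eqxx eq_sym.
  by move/sub; rewrite inE.
apply/forallP => x.
case/andP: (H x) => /cards1P [u eu] _.
have : u \in [set u0 in wcomp F x | outdeg F u0 == 0%N] by rewrite eu inE.
rewrite !inE => /andP [c od0].
rewrite eF outdeg_Fof eqb0 negbK in od0.
rewrite eF in c.
rewrite (conn_inv_b (h := fun z => [exists y, fconnect f z y && (f y == y)]) _ c).
  by apply/existsP; exists u; rewrite connect0.
by move=> z; apply: reach_inv.
Qed.

End Bridge.

Lemma bigmin_le (I : eqType) (r : seq I) (P : pred I) (g : I -> nat) m x :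
  x \in r -> P x -> (\big[minn/m]_(i <- r | P i) g i <= g x)%N.
Proof.
elim: r => // y r IH; rewrite in_cons big_cons => /orP [/eqP <-|xr] Px.
  by rewrite Px geq_minl.
case: (P y); last exact: IH.
exact: leq_trans (geq_minr _ _) (IH xr Px).
Qed.

Section Final.
Variables (R : realFieldType) (n : nat) (W : 'M[R]_n).
Hypotheses (hloop : forall i, W i i = 0) (hpos : forall i j, 0 <= W i j).
Local Notation T := 'I_n.
Implicit Types (f g : {ffun T -> T}) (F : {set T * T}) (i j u v x y : T).

Lemma sum_transfer (G : {set T * T} -> R) (c : {ffun T -> T} -> bool)
  (cF : {set T * T} -> bool) : (forall f, good W f -> cF (Fof f) = c f) ->
  \sum_(F | is_inforest W F && cF F) G F = \sum_(f | good W f && c f) G (Fof f).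
Proof.
move=> hc.
rewrite (eq_bigl (fun f => f \in [set f | good W f && c f])); last by move=> f; rewrite inE.
rewrite -(big_imset (fun F => G F) (h := @Fof n)) /=; last by move=> f1 f2 _ _; apply: Fof_inj.
apply: eq_bigl => F; apply/idP/imsetP.
  case/andP => /(inforest_Fof hloop) [f [gf ->]] cf.
  by exists f => //; rewrite inE gf -hc.
by move=> [f]; rewrite inE => /andP [gf cf] ->; rewrite good_inforest // hc.
Qed.

Lemma sigmaE k : sigma W k = Sf W k.
Proof.
rewrite /sigma /Sf (@sum_transfer _ (fun f => nf f == k)).
  by apply: eq_bigr => f _; rewrite sweight_Fof.
by move=> f _; rewrite card_Fof.
Qed.

Lemma QsumE k i j : \sum_(F | [&& is_inforest W F, #|F| == k & rooted_at F i j]) sweight W F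
  = Qf W k i j.
Proof.
rewrite /Qf (@sum_transfer _ (fun f => (nf f == k) && (rt f i == j))
  (fun F => (#|F| == k) && rooted_at F i j)).
  by apply: eq_big => [f|f _]; rewrite ?andbA // sweight_Fof.
by move=> f gf; rewrite card_Fof (rooted_Fof _ _ gf).
Qed.

Lemma QmxE k i j : Qmx W k i j = Qf W k i j.
Proof. by rewrite mxE QsumE. Qed.

Lemma lap_rec k : laplacian W *m Qmx W k = sigma W k.+1 *: 1%:M - Qmx W k.+1.
Proof.
apply/matrixP => i j; rewrite !mxE QsumE sigmaE (mulrC (Sf _ _)) -(rec_fun hloop hpos).
rewrite (bigD1 i) //= [RHS](bigD1 i) //= hloop mul0r add0r mxE eqxx.
rewrite big_distrl /= -big_split /=; apply: eq_bigr => m mi.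
rewrite !QmxE [laplacian _ _ _]mxE eq_sym (negbTE mi) mulrBr mulNr.
by [].
Qed.

Definition idf : {ffun T -> T} := [ffun x => x].

Lemma good_idf : good W idf.
Proof.
apply/andP; split.
  by apply/forallP => x; apply/existsP; exists x; rewrite connect0 ffunE eqxx.
by apply/forallP => x; rewrite ffunE eqxx.
Qed.

Lemma nf0 f : (nf f == 0%N) = (f == idf).
Proof.
rewrite cards_eq0; apply/eqP/eqP => [e|->].
  apply/ffunP => x; rewrite ffunE; apply/eqP; apply/negPn/negP => fx.
  have : x \in [set x | f x != x] by rewrite inE.
  by rewrite e inE.
by apply/setP => x; rewrite !inE ffunE eqxx.
Qed.

Lemma nf_idf : nf idf = 0%N.
Proof. by apply/eqP; rewrite nf0. Qed.

Lemma wt_idf : wt W idf = 1.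
Proof. by rewrite /wt big_pred0 // => x; rewrite ffunE eqxx. Qed.

Lemma rt_idf x : rt idf x = x.
Proof. by apply/eqP; rewrite rt_id ?ffunE ?eqxx //; case/andP: good_idf. Qed.

Lemma Q0 : Qmx W 0 = 1%:M.
Proof.
apply/matrixP => i j; rewrite QmxE mxE /Qf.
rewrite (eq_bigl (fun f => (f == idf) && (i == j))); last first.
  move=> f; rewrite /Pk nf0; have [->|] := eqVneq f idf; last by rewrite andbF.
  by rewrite good_idf rt_idf.
have [e|ne] := eqVneq i j; last by rewrite big_pred0 // => f; rewrite andbF.
by rewrite (eq_bigl (pred1 idf)) ?big_pred1_eq ?wt_idf // => f; rewrite andbT.
Qed.

Lemma s0 : sigma W 0 = 1.
Proof.
rewrite sigmaE /Sf (eq_bigl (pred1 idf)) ?big_pred1_eq ?wt_idf // => f.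
by rewrite /Pk nf0 /=; have [->|] := eqVneq f idf; rewrite ?good_idf ?andbF.
Qed.

Lemma nf_le f : (nf f <= n)%N.
Proof. by have := max_card (mem [set x | f x != x]); rewrite card_ord. Qed.

Lemma dim_le f : good W f -> (nf f <= n - inforest_dim W)%N.
Proof.
move=> gf; have := bigmin_le (r := index_enum _) (P := is_inforest W) (@ntrees n)
   n (mem_index_enum (Fof f)) (good_inforest gf).
rewrite -/(inforest_dim W) ntrees_Fof => h.
by have := nf_le f; lia.
Qed.

Lemma dim_attained : exists2 f, good W f & nf f = (n - inforest_dim W)%N.
Proof.
pose K (z : nat) := exists2 f, good W f & z = (n - nf f)%N.
have : K (inforest_dim W).
  rewrite /inforest_dim; apply: (big_ind K).
  - by exists idf; rewrite ?good_idf // nf_idf subn0.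
  - move=> a b [f1 g1 e1] [f2 g2 e2]; case: (leqP a b) => ab.
      by exists f1; rewrite // (minn_idPl ab).
    by exists f2; rewrite // (minn_idPr (ltnW ab)).
  - by move=> F /(inforest_Fof hloop) [f [gf ->]]; exists f; rewrite // ntrees_Fof.
move=> [f gf e]; exists f => //; by rewrite e subKn // nf_le.
Qed.

Lemma dim_len : (inforest_dim W <= n)%N.
Proof.
have := bigmin_le (r := index_enum _) (P := is_inforest W) (@ntrees n)
   n (mem_index_enum (Fof idf)) (good_inforest good_idf).
by rewrite -/(inforest_dim W) ntrees_Fof nf_idf subn0.
Qed.

Lemma wt_ge0 f : 0 <= wt W f.
Proof. by apply: prodr_ge0 => x _. Qed.

Lemma wt_gt0 f : good W f -> 0 < wt W f.
Proof. by move=> gf; apply: prodr_gt0 => x fx; apply: good_arc. Qed.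

Lemma exists_nf f : good W f -> forall k, (k <= nf f)%N -> exists2 g, good W g & nf g = k.
Proof.
move Em : (nf f) => m; elim: m f Em => [|m IH] f Em gf k.
  by rewrite leqn0 => /eqP ->; exists f.
rewrite leq_eqVlt => /orP [/eqP ->|]; first by exists f.
rewrite ltnS => km.
have : [set x | f x != x] != set0 by rewrite -cards_eq0 -/(nf f) Em.
case/set0Pn => x; rewrite inE => fx.
have gc := good_cut x gf.
have e : nf f = (nf (updf f x x)).+1.
  by rewrite -{1}(updf_id f x) -{1}(updK f x x (f x)) nf_attach ?updf_i.
apply: (IH (updf f x x)) => //; first by move: e; rewrite Em => -[].
Qed.

Lemma sigma_gt0 k : (k <= n - inforest_dim W)%N -> 0 < sigma W k.
Proof.
move=> kle; have [f0 g0 e0] := dim_attained.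
have kf : (k <= nf f0)%N by rewrite e0.
have [g gg eg] := exists_nf g0 kf.
rewrite sigmaE /Sf (bigD1 g) /=; last by rewrite /Pk gg eg eqxx.
by apply: ltr_wpDr; [apply: sumr_ge0 => f _; apply: wt_ge0 | apply: wt_gt0].
Qed.

Lemma big_k k : (n - inforest_dim W < k)%N -> sigma W k = 0 /\ Qmx W k = 0.
Proof.
move=> lt.
have nP f : Pk W k f = false.
  apply/negP => /andP [gf /eqP nk]; have := dim_le gf.
  by rewrite nk leqNgt lt.
split; first by rewrite sigmaE /Sf big_pred0.
by apply/matrixP => i j; rewrite QmxE mxE /Qf big_pred0 // => f; rewrite nP.
Qed.

Lemma card_fix f : #|[set x | f x == x]| = (n - nf f)%N.
Proof.
have e := cardsC [set x | f x != x]; rewrite card_ord in e.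
rewrite -[X in (X - _)%N]e addKn; apply: eq_card => x.
by rewrite !inE negbK.
Qed.

Lemma tr_Q k : \tr (Qmx W k) = (n - k)%:R * sigma W k.
Proof.
rewrite /mxtrace (eq_bigr (fun i => Qf W k i i)); last by move=> i _; rewrite QmxE.
rewrite sigmaE /Sf mulr_sumr.
under eq_bigr => i _ do rewrite QfE.
rewrite exchange_big /=; apply: eq_bigr => f /andP [gf /eqP nk].
rewrite -mulr_sumr mulrC; congr (_ * _).
rewrite -natr_sum; congr (_%:R).
rewrite -nk -card_fix -sum1_card [RHS]big_mkcond /=; apply: eq_bigr => x _.
by rewrite inE (rt_id _ (good_acyc gf)); case: (f x == x).
Qed.

End Final.

End PropAux.
Import PropAux.

Local Open Scope ring_scope.

Theorem proposition9 (R : realFieldType) (n : nat) (W : 'M[R]_n)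
  (hn : (1 < n)%N)
  (hloop : forall i, W i i = 0)
  (hpos : forall i j, 0 <= W i j) :
  let L := laplacian W in
  let d := inforest_dim W in
  let Jt := Jmx W (n - d) in
  let Qt := Qmx W (n - d) in
  [/\ L *m Jt = 0 /\ Jt *m L = 0 /\ L *m Qt = 0 /\ Qt *m L = 0,
      (forall k, (k <= n - d)%N -> Jt *m Jmx W k = Jt /\ Jmx W k *m Jt = Jt),
      Jt *m Jt = Jt &
      [/\ \rank Jt = d, eigmult 1 Jt = d, \tr Jt = d%:R & eigmult 0 Jt = (n - d)%N]].
Proof.
move=> L d Jt Qt.
have rec k : L *m Qmx W k = sigma W k.+1 *: 1%:M - Qmx W k.+1 by apply: lap_rec.
have Qs k : Qmx W k.+1 = sigma W k.+1 *: 1%:M - L *m Qmx W k.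
  by rewrite rec opprB addrC subrK.
have comm k : L *m Qmx W k = Qmx W k *m L.
  elim: k => [|k IH]; first by rewrite (Q0 hloop) mul1mx mulmx1.
  rewrite Qs mulmxBr mulmxBl -scalemxAr -scalemxAl mulmx1 mul1mx.
  by rewrite -[(L *m _) *m L]mulmxA -IH.
have LQN : L *m Qt = 0.
  rewrite /Qt rec; have [-> ->] := big_k hloop (ltnSn (n - d)).
  by rewrite scale0r subr0.
have QNL : Qt *m L = 0 by rewrite -comm.
have QNQ k : Qt *m Qmx W k = sigma W k *: Qt.
  elim: k => [|k IH]; first by rewrite (Q0 hloop) mulmx1 (s0 hloop) scale1r.
  by rewrite Qs mulmxBr -scalemxAr mulmx1 mulmxA QNL mul0mx subr0.
have QQN k : Qmx W k *m Qt = sigma W k *: Qt.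
  elim: k => [|k IH]; first by rewrite (Q0 hloop) mul1mx (s0 hloop) scale1r.
  by rewrite Qs mulmxBl -scalemxAl mul1mx -mulmxA IH -scalemxAr LQN scaler0 subr0.
have sne k : (k <= n - d)%N -> sigma W k != 0.
  by move=> kle; rewrite gt_eqF // sigma_gt0.
have sN := sne _ (leqnn (n - d)).
have JJ k : (k <= n - d)%N -> Jt *m Jmx W k = Jt /\ Jmx W k *m Jt = Jt.
  move=> kle; rewrite /Jt /Jmx -/Qt; split.
    by rewrite -scalemxAl -scalemxAr QNQ !scalerA mulrVK // unitfE sne.
  by rewrite -scalemxAl -scalemxAr QQN !scalerA mulrAC mulVf ?mul1r // sne.
have idem : Jt *m Jt = Jt by case: (JJ _ (leqnn (n - d))).
have dn : (d <= n)%N by apply: dim_len.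
have tr : \tr Jt = d%:R.
  by rewrite /Jt /Jmx mxtraceZ (tr_Q hloop) (subKn dn) mulrCA mulVf ?mulr1.
have [trr m1 m0] := idem_facts idem.
have rk : \rank Jt = d.
  by apply/eqP; rewrite -(eqr_nat R) -trr tr.
split => //.
- split; first by rewrite /Jt /Jmx -scalemxAr LQN scaler0.
  split; first by rewrite /Jt /Jmx -scalemxAl QNL scaler0.
  by [].
- by split; rewrite // /eigmult ?m1 ?m0 rk.
Qed.
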